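(* Let $G$ be a finite group. Then $G$ has Property A if and only if $G$ is a direct product of Chermak-Delgado simple groups.
   Context: All groups are finite. A group $G$ has Property A if for every non-trivial abelian normal subgroup $A$ of $G$, $|G/C_G(A)| > |A|$. For $H \leq G$, the Chermak-Delgado measure of $H$ in $G$ is $m_G(H) = |H|\,|C_G(H)|$; let $m^*(G) = \max\{ m_G(H) : H \leq G\}$ and $\mathcal{CD}(G) = \{ H \leq G : m_G(H) = m^*(G)\}$. A group $G$ is Chermak-Delgado simple if $\mathcal{CD}(G) = \{1, G\}$. *)

(* Defs.v *)
From mathcomp Require Import all_boot all_fingroup all_solvable.
Set Implicit Arguments. Unset Strict Implicit. Unset Printing Implicit Defensive.
Import GroupScope.
Local Open Scope group_scope.

Definition propertyA (gT : finGroupType) (G : {group gT}) : Prop :=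
  forall A : {group gT}, A <| G -> A :!=: 1 -> abelian A ->
    (#|A| < #|G / 'C_G(A)|)%N.

Definition mCD (gT : finGroupType) (G H : {group gT}) : nat :=
  (#|H| * #|'C_G(H)|)%N.

Definition mstar (gT : finGroupType) (G : {group gT}) : nat :=
  \max_(H : {group gT} | H \subset G) mCD G H.

Definition CDset (gT : finGroupType) (G : {group gT}) : {set {group gT}} :=
  [set H : {group gT} | (H \subset G) && (mCD G H == mstar G)].

Definition CD_simple (gT : finGroupType) (G : {group gT}) : Prop :=
  CDset G = [set 1%G; G].

(* Main.v *)
Require Import Defs.
From mathcomp Require Import all_boot all_fingroup all_solvable.
From mathcomp Require Import zify.
Set Implicit Arguments. Unset Strict Implicit. Unset Printing Implicit Defensive.
Import GroupScope.

Lemma mCD_le (gT : finGroupType) (G H : {group gT}) :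
  H \subset G -> mCD G H <= mstar G.
Proof. by move=> sHG; rewrite /mstar; apply: leq_bigmax_cond. Qed.

Lemma mstar_ex (gT : finGroupType) (G : {group gT}) :
  exists2 H : {group gT}, H \subset G & mCD G H = mstar G.
Proof.
rewrite /mstar (bigmax_eq_arg _ (sub1G G)).
by case: arg_maxnP => //; [apply: sub1G | move=> H sHG _; exists H].
Qed.

Lemma mCD1 (gT : finGroupType) (G : {group gT}) : mCD G 1 = #|G|.
Proof. by rewrite /mCD cards1 mul1n cent1T setIT. Qed.

Lemma mstar_ge (gT : finGroupType) (G : {group gT}) : #|G| <= mstar G.
Proof. by rewrite -mCD1 mCD_le ?sub1G. Qed.

Lemma inCD (gT : finGroupType) (G H : {group gT}) :
  (H \in CDset G) = (H \subset G) && (mCD G H == mstar G).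
Proof. by rewrite inE. Qed.

Section NatL.
Local Open Scope nat_scope.
Lemma natCD (h k x d ch ck cx cd p m : nat) :
  (h * ch)%N = m -> (k * ck)%N = m -> (x * cx)%N <= m -> (d * cd)%N <= m -> (h * k)%N <= (x * d)%N ->
  (ch * ck)%N = (p * cx)%N -> p <= cd -> 0 < d -> 0 < m -> (d * cd)%N = m /\ p = cd.
Proof.
move=> mH mK mX mD a b pc d0 m0.
have key : m * m <= m * (d * p).
  have -> : m * m = (h * k) * (ch * ck) by rewrite -{1}mH -mK; lia.
  rewrite b; apply: (leq_trans (leq_mul a (leqnn _))).
  have -> : x * d * (p * cx) = (x * cx) * (d * p) by lia.
  by rewrite leq_mul2r mX orbT.
rewrite leq_pmul2l // in key.
have dp : d * p <= d * cd by rewrite leq_mul2l pc orbT.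
have e1 : d * cd = m by apply/eqP; rewrite eqn_leq mD (leq_trans key dp).
split=> //; apply/eqP; rewrite eqn_leq pc -(leq_pmul2l d0) e1 //.
Qed.
End NatL.


(* the key supermodularity inequality *)
Lemma CD_cap_aux (gT : finGroupType) (G H K : {group gT}) :
  H \in CDset G -> K \in CDset G ->
  (H :&: K)%G \in CDset G /\ #|'C_G(H) * 'C_G(K)| = #|'C_G(H :&: K)|.
Proof.
rewrite !inCD => /andP[sHG /eqP mH] /andP[sKG /eqP mK].
set X := (H <*> K)%G; set D := (H :&: K)%G.
have sXG : X \subset G by rewrite join_subG sHG.
have sDG : D \subset G by rewrite subIset ?sHG.
have mX := mCD_le sXG; have mD := mCD_le sDG; rewrite /mCD in mX mD.
have a : #|H| * #|K| <= #|X| * #|D|.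
  rewrite mul_cardG leq_mul2r subset_leq_card ?orbT //.
  by rewrite mulG_subG joing_subl joing_subr.
have eCX : 'C_G(H) :&: 'C_G(K) = 'C_G(X).
  by apply/setP=> y; rewrite /X centY !inE; case: (y \in G).
have sCD : 'C_G(H) * 'C_G(K) \subset 'C_G(D).
  by rewrite mulG_subG !setIS ?centS ?subsetIl ?subsetIr.
have b := mul_cardG 'C_G(H) 'C_G(K); rewrite eCX in b.
have P0 : 0 < #|G| by apply: cardG_gt0.
have ms0 : 0 < mstar G by apply: leq_trans (mstar_ge G).
have [e1 e2] := natCD mH mK mX mD a b (subset_leq_card sCD) (cardG_gt0 D) ms0.
by split; [rewrite sDG /= /mCD e1 | rewrite e2].
Qed.

Lemma CD_cent (gT : finGroupType) (G H : {group gT}) :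
  H \in CDset G -> ('C_G(H))%G \in CDset G.
Proof.
rewrite !inCD => /andP[sHG /eqP mH]; rewrite subsetIl /=.
rewrite eqn_leq mCD_le ?subsetIl //= -mH /mCD mulnC leq_mul2l.
by rewrite subset_leq_card ?orbT // subsetI sHG centsC subsetIr.
Qed.

Lemma CD_conj (gT : finGroupType) (G H : {group gT}) g :
  g \in G -> H \in CDset G -> (H :^ g)%G \in CDset G.
Proof.
move=> Gg; rewrite !inCD => /andP[sHG /eqP mH].
rewrite -{1}(conjGid Gg) conjSg sHG /= -mH /mCD /= cardJg centJ.
by rewrite -{1}(conjGid Gg) -conjIg cardJg.
Qed.

Lemma atom_normal (gT : finGroupType) (G B : {group gT}) :
  B \in CDset G ->
  (forall X : {group gT}, X \in CDset G -> X \subset B -> X :=: 1 \/ X :=: B) ->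
  B <| G.
Proof.
move=> BCD atom; have sBG : B \subset G by move: BCD; rewrite inCD => /andP[].
rewrite /normal sBG; apply/normsP => g Gg.
have BgCD := CD_conj Gg BCD.
have [DCD ecard] := CD_cap_aux BCD BgCD.
have [D1 | DB] := atom _ DCD (subsetIl _ _).
  rewrite /= D1 cent1T setIT in ecard.
  have eG : 'C_G(B) * 'C_G(B :^ g) = G.
    by apply/eqP; rewrite eqEcard mulG_subG !subsetIl ecard leqnn.
  rewrite -eG in Gg; case/mulsgP: Gg => a b aC bC defg.
  have nBa : B :^ a = B.
    by apply/normP; apply: (subsetP (cent_sub B)); case/setIP: aC.
  have nBb : b^-1 \in 'N(B :^ g).
    by rewrite groupV; apply: (subsetP (cent_sub _)); case/setIP: bC.
  have eb : B :^ g = B :^ b by rewrite defg conjsgM nBa.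
  apply/esym; rewrite -{1}(conjsgK b B) -eb; exact: normP nBb.
apply/eqP; rewrite eq_sym eqEcard cardJg leqnn andbT.
have e : B :&: B :^ g = B := DB.
by rewrite -{1}e subsetIr.
Qed.

Lemma card_quo_cent (gT : finGroupType) (G A : {group gT}) :
  A <| G -> (#|G / 'C_G(A)| * #|'C_G(A)| = #|G|)%N.
Proof.
move=> nAG; rewrite card_quotient; first by rewrite mulnC Lagrange ?subsetIl.
by rewrite normsI ?normG ?norms_cent ?normal_norm.
Qed.

Lemma CD_abelian_trivial (gT : finGroupType) (G A : {group gT}) :
  propertyA G -> A \in CDset G -> abelian A -> A :=: 1.
Proof.
move=> pA ACD abA; apply/eqP; apply/negPn/negP => ntA.
pose P := [pred X : {group gT} | (X \in CDset G) && (X :!=: 1)].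
have PA : P A by rewrite inE ACD ntA.
have [B /mingroupP [/andP [BCD ntB] minB] sBA] := mingroup_exists PA.
have nBG : B <| G.
  apply: atom_normal => // X XCD sXB.
  case: (eqVneq (gval X) 1) => [-> | ntX]; [by left | right].
  by rewrite (minB X) // inE XCD ntX.
have := pA B nBG ntB (abelianS sBA abA).
rewrite -(ltn_pmul2r (cardG_gt0 'C_G(B))) card_quo_cent //.
move: BCD; rewrite inCD => /andP[_ /eqP]; rewrite /mCD => ->.
by rewrite ltnNge mstar_ge.
Qed.

Lemma CD_TI (gT : finGroupType) (G H : {group gT}) :
  propertyA G -> H \in CDset G -> H :&: 'C_G(H) = 1.
Proof.
move=> pA HCD; have [ZCD _] := CD_cap_aux HCD (CD_cent HCD).
apply: (CD_abelian_trivial pA ZCD).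
rewrite /abelian /= (subset_trans (subsetIr _ _)) // (subset_trans (subsetIr _ _)) //.
by rewrite centS // subsetIl.
Qed.

Lemma mstar_A (gT : finGroupType) (G : {group gT}) :
  propertyA G -> mstar G = #|G|.
Proof.
move=> pA; apply/eqP; rewrite eqn_leq mstar_ge andbT.
have [H sHG mH] := mstar_ex G.
have HCD : H \in CDset G by rewrite inCD sHG mH eqxx.
rewrite -mH /mCD -TI_cardMg ?(CD_TI pA HCD) // subset_leq_card //.
by rewrite mulG_subG sHG subsetIl.
Qed.

Lemma CD_dprod (gT : finGroupType) (G H : {group gT}) :
  propertyA G -> H \in CDset G -> H \x 'C_G(H) = G.
Proof.
move=> pA HCD; have tiH := CD_TI pA HCD.
move: (HCD); rewrite inCD => /andP[sHG /eqP mH].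
rewrite dprodE ?subsetIr //; apply/eqP.
rewrite eqEcard mulG_subG sHG subsetIl /= TI_cardMg //.
by rewrite -/(mCD G H) mH mstar_A.
Qed.

Lemma dprod_cent (gT : finGroupType) (G H K X : {group gT}) :
  H \x K = G -> X \subset H ->
  'C_G(X) = K * 'C_H(X) /\ #|'C_G(X)| = (#|K| * #|'C_H(X)|)%N.
Proof.
move=> defG sXH; have [_ _ cHK tiHK] := dprodP defG.
have sKC : K \subset 'C(X) by rewrite (subset_trans cHK) ?centS.
have e : 'C_G(X) = K * 'C_H(X).
  by rewrite -(dprodWC defG) /= setIC group_modl // setIC.
split=> //; rewrite e TI_cardMg //; apply/trivgP.
by rewrite -tiHK setIC setIS ?subsetIl.
Qed.

Lemma propA_dprodl (gT : finGroupType) (G H K : {group gT}) :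
  propertyA G -> H \x K = G -> propertyA H.
Proof.
move=> pA defG A nAH ntA abA; have [_ mulHK cHK tiHK] := dprodP defG.
have sAH : A \subset H by case/andP: nAH.
have nAG : A <| G.
  rewrite /normal -mulHK (subset_trans sAH (mulG_subl _ _)) mulG_subG normal_norm //=.
  by rewrite (subset_trans cHK) // (subset_trans (centS sAH)) ?cent_sub.
have := pA A nAG ntA abA.
have [_ cG] := dprod_cent defG sAH.
have cardG : #|G| = (#|H| * #|K|)%N by rewrite -mulHK TI_cardMg.
suff -> : #|G / 'C_G(A)| = #|H / 'C_H(A)| by [].
apply/eqP; rewrite -(eqn_pmul2r (cardG_gt0 'C_H(A))) -(eqn_pmul2r (cardG_gt0 K)).
rewrite -mulnA [(_ * #|K|)%N]mulnC -cG (card_quo_cent nAG) (card_quo_cent nAH).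
by rewrite cardG.
Qed.

Lemma propA_dprodr (gT : finGroupType) (G H K : {group gT}) :
  propertyA G -> H \x K = G -> propertyA K.
Proof. by move=> pA; rewrite dprodC; apply: propA_dprodl. Qed.

Lemma CD_atom_simple (gT : finGroupType) (G H K : {group gT}) :
  propertyA G -> H \x K = G -> H \in CDset G ->
  (forall X : {group gT}, X \in CDset G -> X \subset H -> X :=: 1 \/ X :=: H) ->
  CD_simple H.
Proof.
move=> pA defG HCD atom; have pH := propA_dprodl pA defG.
have [_ mulHK _ tiHK] := dprodP defG.
have cardG : #|G| = (#|H| * #|K|)%N by rewrite -mulHK TI_cardMg.
have sHG : H \subset G by rewrite -mulHK mulG_subl.
have eqm : forall X : {group gT}, X \subset H ->
    (mCD H X == mstar H) = (X \in CDset G).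
  move=> X sXH; have [_ cX] := dprod_cent defG sXH.
  rewrite inCD (subset_trans sXH sHG) /= mstar_A // (mstar_A pA) cardG.
  by rewrite /mCD cX -(eqn_pmul2r (cardG_gt0 K)) mulnCA mulnC [(_ * #|K|)%N]mulnC.
apply/setP => X; rewrite inCD !inE.
case sXH: (X \subset H) => /=; last first.
  by apply/esym/norP; split; apply/negP => /eqP eX; rewrite eX ?sub1G ?subxx in sXH.
rewrite eqm //; apply/idP/idP => [XCD | /orP[] /eqP ->] //.
- by have [e|e] := atom X XCD sXH; apply/orP; [left | right]; apply/eqP/group_inj.
- by rewrite inCD sub1G mCD1 (mstar_A pA) eqxx.
Qed.

Lemma CD_simple_propA (gT : finGroupType) (G : {group gT}) :
  CD_simple G -> propertyA G.
Proof.
move=> cdG A nAG ntA abA.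
have oneCD : 1%G \in CDset G by rewrite cdG set21.
have ms : mstar G = #|G| by move: oneCD; rewrite inCD mCD1 => /andP[_ /eqP].
have sAG : A \subset G by case/andP: nAG.
rewrite -(ltn_pmul2r (cardG_gt0 'C_G(A))) card_quo_cent //.
have le := mCD_le sAG; rewrite ms /mCD in le.
rewrite ltn_neqAle le andbT; apply/negP => /eqP eA.
have : A \in CDset G by rewrite inCD sAG /mCD eA ms eqxx.
rewrite cdG => /set2P[eA1 | eAG]; first by rewrite eA1 eqxx in ntA.
rewrite eAG in eA abA ntA.
have cGG : 'C_G(G) = G by apply/setIidPl.
move: eA; rewrite /= cGG -{3}[#|G|]muln1 => /eqP; rewrite eqn_pmul2l // => /eqP G1.
by move: ntA; rewrite -cardG_gt1 G1.
Qed.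

Lemma dprod_proj (gT : finGroupType) (G H K : {group gT}) : H \x K = G ->
  exists f : {morphism G >-> gT},
    f @* G = H /\ (forall h k, h \in H -> k \in K -> f (h * k) = h).
Proof.
move=> defG.
have cf : trivm K @* K \subset 'C(idm H @* H) by rewrite morphim_trivm sub1G.
exists (dprodm_morphism defG cf); split.
  have := morphim_dprodm defG cf (subxx H) (subxx K); rewrite (dprodW defG) => ->.
  by rewrite morphim_idm // morphim_trivm mulg1.
by move=> h k Hh Kk; rewrite /= dprodmE //= /idm /trivm mulg1.
Qed.

Section NatL2.
Local Open Scope nat_scope.
Lemma natP2 (u v h k : nat) : u <= h -> v <= k -> (u < h) || (v < k) ->
  0 < h -> 0 < k -> u * v < h * k.
Proof. by move=> uh vk /orP[] lt h0 k0; nia. Qed.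
End NatL2.

Lemma propA_half (gT : finGroupType) (H P : {group gT}) :
  propertyA H -> P <| H -> abelian P ->
  (#|P| * #|'C_H(P)| <= #|H|)%N /\ (P :!=: 1 -> (#|P| * #|'C_H(P)| < #|H|)%N).
Proof.
move=> pH nPH abP; case: (eqVneq (gval P) 1) => [P1 | ntP].
  by rewrite P1 cards1 mul1n cent1T setIT.
have lt : (#|P| * #|'C_H(P)| < #|H|)%N.
  by rewrite -(card_quo_cent nPH) ltn_pmul2r ?cardG_gt0 ?pH.
by split=> // ; apply: ltnW.
Qed.

Lemma card_mul_le (gT : finGroupType) (P Q : {group gT}) :
  #|(P * Q)%g| <= (#|P| * #|Q|)%N.
Proof. by rewrite mul_cardG leq_pmulr ?cardG_gt0. Qed.

Lemma propA_dprod (gT : finGroupType) (G H K : {group gT}) :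
  H \x K = G -> propertyA H -> propertyA K -> propertyA G.
Proof.
move=> defG pH pK A nAG ntA abA.
have [_ mulHK cHK tiHK] := dprodP defG.
have [f [fG fE]] := dprod_proj defG.
have defG' : K \x H = G by rewrite dprodC.
have [g [gG gE]] := dprod_proj defG'.
have dec : forall x, x \in G -> x = f x * g x.
  move=> x Gx; have := Gx; rewrite -{1}mulHK => /mulsgP[h k Hh Kk exk]; rewrite exk.
  have chk : k * h = h * k := centP (subsetP cHK k Kk) h Hh.
  have gk : g (h * k) = k by rewrite -chk gE.
  by rewrite fE // gk.
have sAG : A \subset G by case/andP: nAG.
pose P := (f @* A)%G; pose Q := (g @* A)%G.
have nPH : P <| H by rewrite -fG morphim_normal.
have nQK : Q <| K by rewrite -gG morphim_normal.
have abP : abelian P by apply: morphim_abelian.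
have abQ : abelian Q by apply: morphim_abelian.
have sPQ : A \subset P * Q.
  apply/subsetP => a Aa; have Ga := subsetP sAG a Aa.
  by rewrite (dec a Ga) mem_mulg // mem_morphim.
have sC : 'C_G(A) \subset 'C_H(P) * 'C_K(Q).
  apply/subsetP => c /setIP[Gc cAc]; rewrite (dec c Gc) mem_mulg //.
    rewrite inE -{1}fG mem_morphim //=; apply/centP => y /morphimP[a Ga Aa ->].
    by rewrite /commute -!morphM // (centP cAc a Aa).
  rewrite inE -{1}gG mem_morphim //=; apply/centP => y /morphimP[a Ga Aa ->].
  by rewrite /commute -!morphM // (centP cAc a Aa).
have [leP ltP] := propA_half pH nPH abP.
have [leQ ltQ] := propA_half pK nQK abQ.
have cardG : #|G| = (#|H| * #|K|)%N by rewrite -mulHK TI_cardMg.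
rewrite -(ltn_pmul2r (cardG_gt0 'C_G(A))) card_quo_cent // cardG.
have le1 : (#|A| * #|'C_G(A)| <= (#|P| * #|'C_H(P)|) * (#|Q| * #|'C_K(Q)|))%N.
  rewrite mulnACA leq_mul //.
    exact: leq_trans (subset_leq_card sPQ) (card_mul_le _ _).
  exact: leq_trans (subset_leq_card sC) (card_mul_le _ _).
apply: leq_ltn_trans le1 _; apply: natP2 => //; try exact: cardG_gt0.
case: (eqVneq (gval P) 1) => [P1 | ntP]; last by rewrite ltP.
case: (eqVneq (gval Q) 1) => [Q1 | ntQ]; last by rewrite ltQ ?orbT.
by move: sPQ; rewrite P1 Q1 mulg1 => /trivgP A1; rewrite A1 eqxx in ntA.
Qed.

Lemma forward (gT : finGroupType) m (G : {group gT}) :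
  (#|G| <= m)%N -> propertyA G ->
  exists (n : nat) (H : 'I_n -> {group gT}),
    \big[dprod/1]_(i < n) H i = G /\ (forall i, CD_simple (H i)).
Proof.
elim: m G => [|m IH] G leGm pA; first by rewrite leqNgt cardG_gt0 in leGm.
case: (eqVneq (gval G) 1) => [G1 | ntG].
  exists 0, (fun _ => 1%G); split; last by case.
  by rewrite big_ord0 G1.
have Z1 : 'C_G(G) = 1.
  apply/eqP; apply/negPn/negP => ntZ.
  have := pA 'Z(G)%G (center_normal G) ntZ (center_abelian G).
  have -> : 'C_G('Z(G)) = G by apply/setIidPl; rewrite centsC subsetIr.
  by rewrite trivg_quotient cards1 ltnNge cardG_gt0.
have GCD : G \in CDset G by rewrite inCD subxx /mCD Z1 cards1 muln1 (mstar_A pA) eqxx.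
pose P := [pred X : {group gT} | (X \in CDset G) && (X :!=: 1)].
have PG : P G by rewrite inE GCD ntG.
have [H /mingroupP [/andP [HCD ntH] minH] sHG] := mingroup_exists PG.
have atom : forall X : {group gT}, X \in CDset G -> X \subset H -> X :=: 1 \/ X :=: H.
  move=> X XCD sXH.
  case: (eqVneq (gval X) 1) => [-> | ntX]; [by left | right].
  by rewrite (minH X) // inE XCD ntX.
have defG := CD_dprod pA HCD.
have pK := propA_dprodr pA defG.
have [_ mulHK _ tiHK] := dprodP defG.
have ltK : (#|'C_G(H)| <= m)%N.
  have cardG : #|G| = (#|H| * #|'C_G(H)|)%N by rewrite -{1}mulHK TI_cardMg.
  rewrite -ltnS (leq_trans _ leGm) // cardG.
  by rewrite ltn_Pmull ?cardG_gt0 ?cardG_gt1.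
have [n [F [defK cdF]]] := IH _ ltK pK.
pose F' := fun i : 'I_n.+1 => if unlift ord0 i is Some j then F j else H.
exists n.+1, F'; split.
  rewrite big_ord_recl (eq_bigr (fun i => gval (F i))) => [|i _]; last first.
    by rewrite /F' liftK.
  by rewrite /F' unlift_none defK.
move=> i; rewrite /F'; case: (unlift ord0 i) => [j|] //.
exact: CD_atom_simple pA defG HCD atom.
Qed.

Lemma backward (gT : finGroupType) n (F : 'I_n -> {group gT}) (G : {group gT}) :
  \big[dprod/1]_(i < n) F i = G -> (forall i, CD_simple (F i)) -> propertyA G.
Proof.
elim: n F G => [|n IH] F G.
  rewrite big_ord0 => G1 _ A nAG ntA.
  have : A \subset G by case/andP: nAG.
  by rewrite -G1 => /trivgP A1; rewrite A1 eqxx in ntA.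
rewrite big_ord_recl => defG cdF.
have [[K1 K2 e1 e2] _ _ _] := dprodP defG.
rewrite e1 e2 in defG.
apply: (propA_dprod defG).
  have -> : K1 = F ord0 by apply: group_inj; rewrite -e1.
  by apply: CD_simple_propA.
by apply: (IH (fun i => F (lift ord0 i))) => // i.
Qed.

Theorem theorem1 (gT : finGroupType) (G : {group gT}) :
  propertyA G <->
  exists (n : nat) (H : 'I_n -> {group gT}),
    \big[dprod/1]_(i < n) H i = G /\ (forall i, CD_simple (H i)).
Proof.
split; first exact: forward (leqnn _).
by case=> n [F [defG cdF]]; apply: backward defG cdF.
Qed.
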